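(* Let $p$ be an odd prime. There is an isomorphism of $D_{2p}$-sets \[ \mathrm{Map}^{D_2}(D_{2p},\{a,b\})\cong *\amalg *\amalg\coprod_{i=1}^{2^{(p+1)/2}-2}D_{2p}/D_2\ \amalg\coprod_{i=1}^{\frac{2^{p-1}-1}{p}+1-2^{(p-1)/2}}D_{2p}.\]
   Context: $D_{2p}=\langle\tau,\zeta_p\mid\tau^2=\zeta_p^p=(\tau\zeta_p)^2=1\rangle$ is the dihedral group of order $2p$ and $D_2=\langle\tau\rangle$. $\{a,b\}$ is a two-element set with trivial $D_2$-action, and $\mathrm{Map}^{D_2}(D_{2p},\{a,b\})$ is the coinduced $D_{2p}$-set of $D_2$-equivariant maps $D_{2p}\to\{a,b\}$. *)

(* Defs.v *)
From mathcomp Require Import all_boot all_fingroup.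
Set Implicit Arguments. Unset Strict Implicit. Unset Printing Implicit Defensive.
Local Open Scope group_scope.

Section Defs.
Variable gT : finGroupType.

Definition dihedral_pres (G : {set gT}) (p : nat) (tau z : gT) : Prop :=
  [/\ G = <<[set tau; z]>>, tau ^+ 2 = 1, z ^+ p = 1,
      (tau * z) ^+ 2 = 1 & #|G| = (2 * p)%N].

(* Map^{D_2}(G, {a,b}) with {a,b} = bool (trivial D_2-action), D_2 = <[tau]>
   acting on G by left multiplication: maps f : G -> bool with f (tau x) = f x. *)
Definition coind_set (G : {set gT}) (tau : gT) : {set {ffun gT -> bool}} :=
  [set f : {ffun gT -> bool} | [forall x, (x \notin G) ==> ~~ f x]
                              && [forall x in G, f (tau * x) == f x]].

Definition coind_act (G : {set gT}) (g : gT) (f : {ffun gT -> bool})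
  : {ffun gT -> bool} := [ffun x => if x \in G then f (x * g) else false].

(* The G-set  * + * + N1 copies of G/D_2 + N2 copies of G. *)
Definition rhs_type (N1 N2 : nat) : finType :=
  (bool + ('I_N1 * {set gT}) + ('I_N2 * gT))%type.

Definition rhs_set (G : {set gT}) (tau : gT) (N1 N2 : nat) : {set rhs_type N1 N2} :=
  [set y : rhs_type N1 N2 | match y with
     | inl (inl _) => true
     | inl (inr (_, C)) => C \in lcosets <[tau]> G
     | inr (_, x) => x \in G end].

Definition rhs_act (N1 N2 : nat) (g : gT) (y : rhs_type N1 N2) : rhs_type N1 N2 :=
  match y with
  | inl (inl b) => inl (inl b)
  | inl (inr (i, C)) => inl (inr (i, g *: C))
  | inr (i, x) => inr (i, g * x) end.

End Defs.

Definition gset_iso (gT : finGroupType) (aT bT : finType) (G : {set gT})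
  (A : {set aT}) (actA : gT -> aT -> aT) (B : {set bT}) (actB : gT -> bT -> bT)
  : Prop :=
  exists phi : aT -> bT,
    [/\ {in A, forall x, phi x \in B},
        {in A &, injective phi},
        {in B, forall y, exists2 x, x \in A & phi x = y}
      & {in G, forall g, {in A, forall x, phi (actA g x) = actB g (phi x)}}].

(* Main.v *)
Require Import Defs.
From mathcomp Require Import all_boot all_fingroup.
From mathcomp Require Import all_solvable zify.
Set Implicit Arguments. Unset Strict Implicit. Unset Printing Implicit Defensive.
Local Open Scope group_scope.

Lemma card_rhs (gT : finGroupType) (G : {group gT}) tau N1 N2 :
  #|rhs_set G tau N1 N2| = (2 + N1 * #|lcosets <[tau]> G| + N2 * #|G|)%N.
Proof.
rewrite -sum1_card big_sumType big_sumType /=.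
rewrite !sum1dep_card.
have -> : [set x | inl (inl x) \in rhs_set G tau N1 N2] = setT.
  by apply/setP => x; rewrite !inE.
have -> : [set x | inl (inr x) \in rhs_set G tau N1 N2] = setX setT (lcosets <[tau]> G).
  by apply/setP => -[i C]; rewrite !inE.
have -> : [set x | inr x \in rhs_set G tau N1 N2] = setX setT G.
  by apply/setP => -[i C]; rewrite !inE.
by rewrite !cardsX !cardsT card_bool !card_ord.
Qed.


Lemma card_supp (T : finType) (D : {set T}) :
  #|[set c : {ffun T -> bool} | [forall x, (x \notin D) ==> ~~ c x]]| = (2 ^ #|D|)%N.
Proof.
rewrite -card_bool -(card_pffun_on false D predT).
apply: eq_card => c; rewrite inE; apply/forallP/pffun_onP => [h|[h _] x]; last first.
  apply/implyP => xD; apply/negP => cx; move/subsetP: h => /(_ x).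
  by rewrite inE cx => /(_ isT); rewrite (negbTE xD).
split; last by move=> b.
apply/subsetP => x; rewrite inE; apply: contraR => xD.
by move/implyP: (h x) => /(_ xD) /negbTE ->.
Qed.

Lemma card_via (T : finType) (S : {set {ffun T -> bool}}) (D : {set T})
  (ext : {ffun T -> bool} -> {ffun T -> bool}) :
  {in S &, forall f1 f2 : {ffun T -> bool}, (forall x, x \in D -> f1 x = f2 x) -> f1 = f2} ->
  (forall c : {ffun T -> bool}, (forall x, x \notin D -> c x = false) ->
      ext c \in S /\ (forall x, x \in D -> ext c x = c x)) ->
  #|S| = (2 ^ #|D|)%N.
Proof.
move=> H1 H2; rewrite -card_supp.
pose res (f : {ffun T -> bool}) := [ffun x => (x \in D) && f x].
have rinj : {in S &, injective res}.
  move=> f1 f2 f1S f2S e; apply: H1 => // x xD.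
  by move/ffunP: e => /(_ x); rewrite !ffunE xD.
rewrite -(card_in_imset rinj).
have -> // : [set res f | f in S] = [set c : {ffun T -> bool} | [forall x, (x \notin D) ==> ~~ c x]].
apply/setP => c; rewrite inE.
apply/imsetP/forallP => [[f fS ->] x|h].
  by rewrite ffunE; apply/implyP => /negbTE ->.
have h' : forall x, x \notin D -> c x = false.
  by move=> x xD; move/implyP: (h x) => /(_ xD) /negbTE.
have [eS eD] := H2 c h'.
exists (ext c) => //; apply/ffunP => x; rewrite ffunE.
by case xD: (x \in D); [rewrite eD | rewrite h' ?xD].
Qed.

Section Grp.
Variables (p : nat) (gT : finGroupType) (G : {group gT}) (tau z : gT).
Hypotheses (pr_p : prime p) (odd_p : odd p).
Hypotheses (HG : G = <<[set tau; z]>> :> {set gT}) (Ht2 : tau ^+ 2 = 1)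
  (Hzp : z ^+ p = 1) (Htz : (tau * z) ^+ 2 = 1) (cardG : #|G| = (2 * p)%N).

Lemma tauG : tau \in G. Proof. by rewrite HG mem_gen // !inE eqxx. Qed.
Lemma zG : z \in G. Proof. by rewrite HG mem_gen // !inE eqxx orbT. Qed.
Lemma tautau : tau * tau = 1. Proof. by rewrite -expg2. Qed.
Lemma tauV : tau^-1 = tau.
Proof. by apply/eqP; rewrite eq_invg_mul tautau. Qed.
Lemma zJ : z ^ tau = z^-1.
Proof.
rewrite conjgE tauV; apply/eqP; rewrite eq_mulgV1 invgK mulgA; apply/eqP.
by rewrite -Htz expg2 !mulgA.
Qed.
Lemma wJ w : w \in <[z]> -> w ^ tau = w^-1.
Proof. by case/cycleP=> i ->; rewrite conjXg zJ expVgn. Qed.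

Lemma RnZ : <[tau]> \subset 'N(<[z]>).
Proof.
by rewrite cycle_subG; apply/normP; rewrite -cycleJ zJ cycleV.
Qed.

Lemma G_RZ : G :=: <[tau]> * <[z]>.
Proof.
rewrite -norm_joinEl ?RnZ //; apply/eqP; rewrite eqEsubset; apply/andP; split.
  rewrite HG gen_subG; apply/subsetP=> x; rewrite !inE => /orP[]/eqP->.
    by rewrite mem_gen // inE cycle_id.
  by rewrite mem_gen // inE cycle_id orbT.
by rewrite join_subG !cycle_subG tauG zG.
Qed.

Lemma ords : [/\ #[tau] = 2, #[z] = p & #|<[tau]> :&: <[z]>| = 1%N].
Proof.
have pg1 := prime_gt1 pr_p.
have h1 : #[tau] %| 2 by rewrite order_dvdn Ht2.
have h2 : #[z] %| p by rewrite order_dvdn Hzp.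
have h3 := mul_cardG <[tau]> <[z]>.
rewrite -G_RZ cardG in h3.
have h4 : 0 < #|<[tau]> :&: <[z]>| by apply/card_gt0P; exists 1; rewrite group1.
have le1 : #[tau] <= 2 by apply: dvdn_leq.
have le2 : #[z] <= p by apply: dvdn_leq => //; apply: ltnW.
rewrite /order in le1 le2 h1 h2 *.
move: h3 h4 le1 le2; set a := #|<[tau]>|; set b := #|<[z]>|; set c := #|_ :&: _|.
move=> h3 h4 le1 le2.
have ha : a = 2 by nia.
have hb : b = p by nia.
split => //; nia.
Qed.

Lemma oz : #[z] = p. Proof. by case: ords. Qed.
Lemma otau : #[tau] = 2. Proof. by case: ords. Qed.
Lemma tau_neq1 : tau != 1. Proof. by rewrite -order_eq1 otau. Qed.
Lemma tauNZ : tau \notin <[z]>.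
Proof.
apply/negP=> tz; case: ords => _ _ /eqP/cards1P[x hx].
have : 1 \in <[tau]> :&: <[z]> by rewrite group1.
have : tau \in <[tau]> :&: <[z]> by rewrite inE cycle_id tz.
by rewrite hx !inE => /eqP h1 /eqP h2; move: tau_neq1; rewrite h1 h2 eqxx.
Qed.

Lemma R_elems x : (x \in <[tau]>) = (x == 1) || (x == tau).
Proof.
apply/cycleP/orP => [[i ->]|[]/eqP->]; last 2 first.
- by exists 0.
- by exists 1%N; rewrite expg1.
rewrite -(expg_mod i Ht2); have : i %% 2 < 2 by rewrite ltn_mod.
by case: (i %% 2) => [|[|]] // _; [left | right; rewrite expg1].
Qed.

Lemma G_dec x : x \in G -> (x \in <[z]>) || (tau * x \in <[z]>).
Proof.
rewrite G_RZ => /mulsgP[t w]; rewrite R_elems => /orP[]/eqP-> wz ->.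
  by rewrite mul1g wz.
by rewrite mulgA tautau mul1g wz orbT.
Qed.

Lemma ZG : <[z]> \subset G. Proof. by rewrite cycle_subG zG. Qed.
Lemma RG : <[tau]> \subset G. Proof. by rewrite cycle_subG tauG. Qed.

Lemma Zgen w : w \in <[z]> -> w != 1 -> z \in <[w]>.
Proof.
move=> wz w1.
have sub : <[w]> \subset <[z]> by rewrite cycle_subG.
have : #[w] %| p by rewrite -oz; apply: cardSg.
case/primeP: pr_p => _ hp /hp/orP[|/eqP ow]; first by rewrite order_eq1 (negbTE w1).
have /eqP -> : <[w]> == <[z]> by rewrite eqEcard sub /=; have := oz; rewrite /order => ->; rewrite -ow.
exact: cycle_id.
Qed.

Lemma oddZ w : w \in <[z]> -> w * w = 1 -> w = 1.
Proof.
move=> wz ww.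
have h1 : #[w] %| 2 by rewrite order_dvdn expg2 ww.
have h2 : #[w] %| p by rewrite -oz; apply: cardSg; rewrite cycle_subG.
have : #[w] %| gcdn 2 p by rewrite dvdn_gcd h1 h2.
have -> : gcdn 2 p = 1%N.
  by rewrite gcdnC -gcdn_modl modn2 odd_p.
by rewrite dvdn1 order_eq1 => /eqP.
Qed.

Lemma wp w : w \in <[z]> -> w ^+ p = 1.
Proof. by case/cycleP=> i ->; rewrite -expgM mulnC expgM Hzp expg1n. Qed.

Lemma sqrtZ w : w \in <[z]> -> exists2 v, v \in <[z]> & v * v = w.
Proof.
move=> wz; exists (w ^+ (p.+1)./2); first exact: groupX.
rewrite -expgD addnn.
have -> : ((p.+1)./2).*2 = p.+1 by rewrite -[in RHS](odd_double_half p.+1) /= odd_p.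
by rewrite expgS wp // mulg1.
Qed.

Lemma wtau w : w \in <[z]> -> w * tau = tau * w^-1.
Proof. by move=> wz; rewrite -wJ // conjgE tauV !mulgA tautau mul1g. Qed.

Lemma commZ w : w \in <[z]> -> w * tau = tau * w -> w = 1.
Proof.
move=> wz; rewrite wtau // => /mulgI h; apply: oddZ => //.
by rewrite -{1}h mulVg.
Qed.

Lemma comm_tau x : x \in G -> x * tau = tau * x -> x \in <[tau]>.
Proof.
move=> xG c; case/orP: (G_dec xG) => [xz|txz].
  by rewrite (commZ xz c) group1.
have : (tau * x) * tau = tau * (tau * x) by rewrite -mulgA c mulgA.
move/(commZ txz) => h.
have -> : x = tau by rewrite -(mul1g x) -tautau -mulgA h mulg1.
exact: cycle_id.
Qed.

Implicit Types f : {ffun gT -> bool}.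
Definition act g (f : {ffun gT -> bool}) := coind_act G g f.
Definition A := coind_set G tau.
Definition Const (b : bool) : {ffun gT -> bool} := [ffun x => (x \in G) && b].
Definition stab f := [set g in G | act g f == f].
Definition zpart x := if x \in <[z]> then x else tau * x.

Lemma inA f : reflect ((forall x, x \notin G -> f x = false) /\
                      (forall x, x \in G -> f (tau * x) = f x)) (f \in A).
Proof.
rewrite inE; apply: (iffP andP) => [[/forallP h1 /forall_inP h2]|[h1 h2]]; split.
- by move=> x /(implyP (h1 x)) /negbTE.
- by move=> x /h2 /eqP.
- by apply/forallP => x; apply/implyP => /h1 ->.
- by apply/forall_inP => x /h2 ->.
Qed.

Lemma actE g f x : act g f x = if x \in G then f (x * g) else false.
Proof. by rewrite /act /coind_act ffunE. Qed.

Lemma actA g f : g \in G -> f \in A -> act g f \in A.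
Proof.
move=> gG /inA[h1 h2]; apply/inA; split=> x.
  by rewrite actE => /negbTE ->.
by move=> xG; rewrite !actE groupM ?tauG // xG -mulgA h2 // groupM.
Qed.

Lemma act1 f : f \in A -> act 1 f = f.
Proof.
move=> /inA[h1 _]; apply/ffunP => x; rewrite actE mulg1.
by case: ifP => // /negbT /h1 ->.
Qed.

Lemma actM g h f : g \in G -> h \in G -> act (g * h) f = act g (act h f).
Proof.
move=> gG hG; apply/ffunP => x; rewrite !actE.
by case: ifP => // xG; rewrite groupM // mulgA.
Qed.

Lemma actVK g f : g \in G -> f \in A -> act g^-1 (act g f) = f.
Proof. by move=> gG fA; rewrite -actM ?groupV // mulVg act1. Qed.

Lemma actKV g f : g \in G -> f \in A -> act g (act g^-1 f) = f.
Proof. by move=> gG fA; rewrite -actM ?groupV // mulgV act1. Qed.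

Lemma act_inj g f1 f2 : g \in G -> f1 \in A -> f2 \in A -> act g f1 = act g f2 -> f1 = f2.
Proof. by move=> gG h1 h2 e; rewrite -(actVK gG h1) e actVK. Qed.

Lemma zpartZ x : x \in G -> zpart x \in <[z]>.
Proof. by rewrite /zpart => /G_dec; case: ifP. Qed.

Lemma fzpart f x : f \in A -> x \in G -> f x = f (zpart x).
Proof. by move=> /inA[_ h] xG; rewrite /zpart; case: ifP => // _; rewrite h. Qed.

Lemma ConstA b : Const b \in A.
Proof.
apply/inA; split=> x; rewrite !ffunE; first by move/negbTE ->.
by move=> xG; rewrite groupM ?tauG ?xG.
Qed.

Lemma act_Const g b : g \in G -> act g (Const b) = Const b.
Proof. by move=> gG; apply/ffunP => x; rewrite actE !ffunE; case: ifP => // xG; rewrite groupM. Qed.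

Lemma ZfixE f : f \in A -> (forall w, w \in <[z]> -> act w f = f) -> f = Const (f 1).
Proof.
move=> fA h; have e w : w \in <[z]> -> f w = f 1.
  by move=> wz; have := h w wz; move/ffunP/(_ 1); rewrite actE group1 mul1g.
apply/ffunP => x; rewrite /Const ffunE; case xG: (x \in G).
  by rewrite (fzpart fA xG) e ?zpartZ ?andbT.
by case/inA: fA => /(_ x) -> //; rewrite xG.
Qed.

Lemma actX w n f : w \in G -> f \in A -> act w f = f -> act (w ^+ n) f = f.
Proof.
move=> wG fA h; elim: n => [|n IH]; first by rewrite expg0 act1.
by rewrite expgS actM ?groupX // IH.
Qed.

Lemma fixZ f w : f \in A -> w \in <[z]> -> w != 1 -> act w f = f -> f = Const (f 1).
Proof.
move=> fA wz w1 h; have wG : w \in G by apply: (subsetP ZG).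
have : z \in <[w]> by apply: Zgen.
case/cycleP=> n zn; apply: ZfixE => // v /cycleP[m ->].
apply: actX => //; first exact: zG.
by rewrite zn; apply: actX.
Qed.

Lemma fixZ1 f w : f \in A -> f != Const (f 1) -> w \in <[z]> -> act w f = f -> w = 1.
Proof.
move=> fA nc wz h; apply/eqP; apply/negPn/negP => w1.
by move: nc; rewrite (fixZ fA wz w1 h) !ffunE group1 eqxx.
Qed.

Lemma stab_act g h f : g \in G -> h \in G -> f \in A ->
  (act h (act g f) == act g f) = (act (g^-1 * h * g) f == f).
Proof.
move=> gG hG fA; apply/eqP/eqP => e.
  by rewrite -mulgA actM ?groupV ?groupM // actM // e actVK.
have hg : h * g = g * (g^-1 * h * g) by rewrite -!mulgA mulKVg.
by rewrite -actM // hg actM ?groupM ?groupV // e.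
Qed.

Lemma Const_act_inv g f : g \in G -> f \in A -> act g f = Const (act g f 1) -> f = Const (f 1).
Proof.
move=> gG fA; move: (act g f 1) => c e.
have e2 : f = Const c by rewrite -(act_Const c (groupVr gG)) -e actVK.
by rewrite {1}e2 e2 ffunE group1.
Qed.

Lemma classify f : f \in A ->
  [\/ f = Const (f 1), exists2 g, g \in G & stab (act g f) = <[tau]>
     | stab f = 1].
Proof.
move=> fA; case: (boolP (f == Const (f 1))) => [/eqP|nc]; first by constructor 1.
case: (boolP [exists h in G, (h != 1) && (act h f == f)]); last first.
  move=> /exists_inP nex; constructor 3; apply/eqP; rewrite eqEsubset; apply/andP; split; last first.
    by rewrite sub1set !inE group1 act1 ?eqxx.
  apply/subsetP => h; rewrite !inE => /andP[hG hf]; apply/negPn/negP => h1.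
  by apply: nex; exists h => //; rewrite h1.
case/exists_inP => h hG /andP[h1 /eqP hf].
case/orP: (G_dec hG) => [hz|thz]; first by move: h1; rewrite (fixZ1 fA nc hz hf) eqxx.
have [v vz vv] := sqrtZ thz.
have vG : v \in G by apply: (subsetP ZG).
constructor 2; exists v => //.
set r := act v f.
have rA : r \in A by apply: actA.
have nr : r != Const (r 1).
  by apply/negP => /eqP e; move: nc; rewrite -(Const_act_inv vG fA e) eqxx.
have tr : act tau r = r.
  apply/eqP; rewrite /r stab_act ?tauG //.
  have -> : v^-1 * tau * v = h.
    rewrite (wtau (groupVr vz)) invgK -mulgA vv mulgA tautau mul1g //.
  by rewrite hf.
apply/eqP; rewrite eqEsubset; apply/andP; split; apply/subsetP => x; rewrite inE.
  case/andP=> xG /eqP xr.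
  case/orP: (G_dec xG) => [xz|txz]; first by rewrite (fixZ1 rA nr xz xr) group1.
  have : act (tau * x) r = r by rewrite actM ?tauG // xr tr.
  move/(fixZ1 rA nr txz) => e.
  have -> : x = tau by rewrite -(mul1g x) -tautau -mulgA e mulg1.
  exact: cycle_id.
rewrite R_elems => /orP[]/eqP->; first by rewrite group1 act1 ?eqxx.
by rewrite tauG tr eqxx.
Qed.

Definition orb f := [set act g f | g in G].
Definition isR f := stab f == <[tau]>.
Definition F1 := [set r in A | isR r].
Definition rep f := odflt f [pick y in orb f].
Definition S2 := [set r in A | (stab r == 1) && (rep r == r)].
Definition pickg r f := odflt 1 [pick g in G | act g r == f].

Lemma orbP f y : reflect (exists2 g, g \in G & y = act g f) (y \in orb f).
Proof. exact: imsetP. Qed.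

Lemma orb_self f : f \in A -> f \in orb f.
Proof. by move=> fA; apply/orbP; exists 1; rewrite ?group1 ?act1. Qed.

Lemma orbA f y : f \in A -> y \in orb f -> y \in A.
Proof. by move=> fA /orbP[g gG ->]; apply: actA. Qed.

Lemma orb_act g f : g \in G -> f \in A -> orb (act g f) = orb f.
Proof.
move=> gG fA; apply/setP => y; apply/orbP/orbP => [[h hG ->]|[h hG ->]].
  by exists (h * g); rewrite ?groupM // actM.
by exists (h * g^-1); rewrite ?groupM ?groupV // actM ?groupV // actVK.
Qed.

Lemma orb_eq f y : f \in A -> y \in orb f -> orb y = orb f.
Proof. by move=> fA /orbP[g gG ->]; apply: orb_act. Qed.

Lemma pickgP r f : r \in A -> f \in orb r -> pickg r f \in G /\ act (pickg r f) r = f.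
Proof.
move=> rA /orbP[g gG ->]; rewrite /pickg; case: pickP => [k /andP[kG /eqP e]|].
  by [].
by move/(_ g); rewrite gG eqxx.
Qed.

Lemma act_eq_stab r g1 g2 : r \in A -> g1 \in G -> g2 \in G ->
  act g1 r = act g2 r -> g2^-1 * g1 \in stab r.
Proof.
move=> rA g1G g2G e; rewrite inE groupM ?groupV //=.
by rewrite actM ?groupV // e actVK.
Qed.

Lemma stab_eq_act r g1 g2 : r \in A -> g1 \in G -> g2 \in G ->
  g2^-1 * g1 \in stab r -> act g1 r = act g2 r.
Proof.
move=> rA g1G g2G; rewrite inE => /andP[_ /eqP e].
by rewrite -[g1](mulKVg g2) actM ?groupM ?groupV // e.
Qed.

Lemma stab_actE g f h : g \in G -> f \in A ->
  (h \in stab (act g f)) = (g^-1 * h * g \in stab f).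
Proof.
move=> gG fA; rewrite !inE; case hG: (h \in G).
  by rewrite stab_act // !groupM ?groupV.
by rewrite /= groupMr // groupMl ?groupV // hG.
Qed.

Lemma tau_stab_nonfree f g : f \in A -> g \in G -> isR (act g f) -> stab f != 1.
Proof.
move=> fA gG /eqP sR; apply/negP => /eqP sf.
have : tau \in stab (act g f) by rewrite sR cycle_id.
rewrite stab_actE // sf inE => /eqP e.
by move: tau_neq1; rewrite -(conjg_eq1 tau g) conjgE mulgA e eqxx.
Qed.

Lemma Const_isR b : ~~ isR (Const b).
Proof.
apply/negP => /eqP e.
have : z \in stab (Const b) by rewrite inE zG act_Const ?zG ?eqxx.
rewrite e R_elems => /orP[]/eqP ez.
  by move: (prime_gt1 pr_p); rewrite -oz ez order1.
by move: tauNZ; rewrite -ez cycle_id.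
Qed.

Lemma Const_free b : stab (Const b) != 1.
Proof.
apply/negP => /eqP e.
have : tau \in stab (Const b) by rewrite inE tauG act_Const ?tauG ?eqxx.
by rewrite e inE (negbTE tau_neq1).
Qed.

Lemma isR_unique r g : r \in A -> g \in G -> isR r -> isR (act g r) -> act g r = r.
Proof.
move=> rA gG /eqP sr /eqP sgr.
have : tau \in stab (act g r) by rewrite sgr cycle_id.
rewrite stab_actE // sr R_elems => /orP[]/eqP e.
  by move: tau_neq1; rewrite -(conjg_eq1 tau g) conjgE mulgA e eqxx.
have c : g * tau = tau * g.
  by rewrite -{1}e !mulgA mulgV mul1g.
have gR : g \in stab r by rewrite sr comm_tau.
by move: gR; rewrite inE => /andP[_ /eqP].
Qed.


Definition N1 := #|F1|.
Definition N2 := #|S2|.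

Definition phi f : rhs_type gT N1 N2 :=
  if f == Const (f 1) then inl (inl (f 1))
  else match [pick y in orb f | isR y] with
  | Some r => match insub (index r (enum F1)) with
       | Some i => inl (inr (i, pickg r f *: <[tau]>))
       | None => inl (inl false) end
  | None => match insub (index (rep f) (enum S2)) with
       | Some i => inr (i, pickg (rep f) f)
       | None => inl (inl false) end
  end.

Lemma rep_orb f : f \in A -> rep f \in orb f.
Proof.
move=> fA; rewrite /rep; case: pickP => [y //|/(_ f)]; by rewrite orb_self.
Qed.

Lemma rep_act g f : g \in G -> f \in A -> rep (act g f) = rep f.
Proof.
move=> gG fA; rewrite /rep orb_act //; case: pickP => // /(_ f).
by rewrite orb_self.
Qed.

Lemma rep_orbE f y : f \in A -> y \in orb f -> rep y = rep f.
Proof. by move=> fA /orbP[g gG ->]; apply: rep_act. Qed.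

Inductive phi_spec f : rhs_type gT N1 N2 -> Prop :=
| PS0 : f = Const (f 1) -> phi_spec f (inl (inl (f 1)))
| PS1 r i g : r \in F1 -> val i = index r (enum F1) -> g \in G -> act g r = f ->
    f != Const (f 1) -> phi_spec f (inl (inr (i, g *: <[tau]>)))
| PS2 r i g : r \in S2 -> val i = index r (enum S2) -> g \in G -> act g r = f ->
    f != Const (f 1) -> phi_spec f (inr (i, g)).

Lemma phiP f : f \in A -> phi_spec f (phi f).
Proof.
move=> fA; rewrite /phi; case: ifP => [/eqP e|/negbT nc]; first by constructor.
case: pickP => [r /andP[rO rR]|none].
  have rA := orbA fA rO.
  have rF : r \in F1 by rewrite inE rA.
  case: insubP => [i _ ei|]; last by rewrite -mem_enum in rF; move/negP => H; exfalso; apply: H; rewrite /N1 cardE index_mem rF.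
  have [gG ge] : pickg r f \in G /\ act (pickg r f) r = f.
    by apply: pickgP => //; rewrite (orb_eq fA rO) orb_self.
  by apply: PS1 ei gG ge nc.
set r := rep f.
have rO : r \in orb f by apply: rep_orb.
have rA := orbA fA rO.
have fO : f \in orb r by rewrite (orb_eq fA rO) orb_self.
have rS : r \in S2.
  rewrite inE rA /= (rep_orbE fA rO) eqxx andbT.
  case: (classify rA) => [e|[g gG sg]|->//].
    have [kG fk] := pickgP rA fO.
    move: (pickg r f) kG fk => k kG fk.
    have ef : f = Const (r 1) by rewrite -fk {1}e act_Const.
    by move: nc; rewrite {1}ef ef !ffunE group1 eqxx.
  have : act g r \in orb f by rewrite -(orb_eq fA rO); apply/orbP; exists g.
  by move: (none (act g r)) => /= + H; rewrite H /isR sg eqxx.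
case: insubP => [i _ ei|]; last first.
  by rewrite -mem_enum in rS; move/negP => H; exfalso; apply: H; rewrite /N2 cardE index_mem rS.
have [gG ge] := pickgP rA fO.
by apply: PS2 ei gG ge nc.
Qed.


Lemma F1P r : r \in F1 -> r \in A /\ stab r = <[tau]>.
Proof. by rewrite /F1 in_set => /andP[? /eqP]. Qed.
Lemma S2P r : r \in S2 -> [/\ r \in A, stab r = 1 & rep r = r].
Proof. by rewrite /S2 in_set => /andP[? /andP[/eqP ? /eqP ?]]. Qed.

Lemma same_orb r r' g g' : r \in A -> r' \in A -> g \in G -> g' \in G ->
  act g' r' = act g r -> r' = act (g'^-1 * g) r.
Proof. by move=> rA r'A gG g'G e; rewrite actM ?groupV // -e actVK. Qed.

Lemma F1_S2 r r' g g' : r \in F1 -> r' \in S2 -> g \in G -> g' \in G ->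
  act g r = act g' r' -> False.
Proof.
move=> /F1P[rA /eqP rR] /S2P[r'A s1 _] gG g'G e.
have := same_orb r'A rA g'G gG e => e2.
have : isR (act (g^-1 * g') r') by rewrite -e2.
by move/(tau_stab_nonfree r'A (groupM (groupVr gG) g'G)); rewrite s1 eqxx.
Qed.

Lemma F1_eq r r' g g' : r \in F1 -> r' \in F1 -> g \in G -> g' \in G ->
  act g r = act g' r' -> r = r'.
Proof.
move=> /F1P[rA /eqP rR] /F1P[r'A /eqP r'R] gG g'G e.
have := same_orb r'A rA g'G gG e => e2.
by rewrite e2 isR_unique ?groupM ?groupV // -e2.
Qed.

Lemma S2_eq r r' g g' : r \in S2 -> r' \in S2 -> g \in G -> g' \in G ->
  act g r = act g' r' -> r = r'.
Proof.
move=> /S2P[rA _ rr] /S2P[r'A _ r'r] gG g'G e.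
have := same_orb r'A rA g'G gG e => e2.
by rewrite -rr -r'r e2 rep_act ?groupM ?groupV.
Qed.

Lemma coset_eq r g g' : r \in F1 -> g \in G -> g' \in G ->
  (act g r == act g' r) = (g *: <[tau]> == g' *: <[tau]>).
Proof.
move=> /F1P[rA rR] gG g'G; apply/eqP/eqP => e.
  apply/lcoset_eqP; rewrite mem_lcoset.
  by move: (act_eq_stab rA gG g'G e); rewrite rR.
apply: stab_eq_act => //; rewrite rR.
have : g \in g *: <[tau]>%G by apply: lcoset_refl.
by rewrite e mem_lcoset.
Qed.

Lemma free_eq r g g' : r \in S2 -> g \in G -> g' \in G -> act g r = act g' r -> g = g'.
Proof.
move=> /S2P[rA s1 _] gG g'G e.
have := act_eq_stab rA gG g'G e; rewrite s1 inE => /eqP e2.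
by rewrite -(mulKVg g' g) e2 mulg1.
Qed.

Lemma phi_const f : f = Const (f 1) -> phi f = inl (inl (f 1)).
Proof. by move=> e; rewrite /phi -e eqxx. Qed.

Lemma phi_in f : f \in A -> phi f \in rhs_set G tau N1 N2.
Proof.
move=> fA; case: (phiP fA) => [e|r i g rF ei gG gr nc|r i g rS ei gG gr nc];
  rewrite inE //.
by apply/lcosetsP; exists g.
Qed.

Lemma phi_equiv h f : h \in G -> f \in A -> phi (act h f) = rhs_act h (phi f).
Proof.
move=> hG fA.
have hfA : act h f \in A by apply: actA.
case: (phiP fA) => [e|r i g rF ei gG gr nc|r i g rS ei gG gr nc].
- have -> : act h f = f by rewrite e act_Const.
  by rewrite phi_const.
- have [rA _] := F1P rF.
  have hgr : act h f = act (h * g) r by rewrite actM // gr.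
  case: (phiP hfA) => [e|r' i' g' rF' ei' gG' gr' nc'|r' i' g' rS' ei' gG' gr' nc'].
  + by move: nc; rewrite -(Const_act_inv hG fA e) eqxx.
  + have er : r' = r by apply: (F1_eq rF' rF gG' (groupM hG gG)); rewrite gr' hgr.
    subst r'.
    have -> : i' = i by apply: val_inj; rewrite ei ei'.
    rewrite /= -lcosetM; congr (inl (inr (_, _))); apply/eqP.
    by rewrite -(coset_eq rF) ?groupM // gr' hgr.
  + by case: (F1_S2 rF rS' (groupM hG gG) gG'); rewrite gr' hgr.
- have [rA _ _] := S2P rS.
  have hgr : act h f = act (h * g) r by rewrite actM // gr.
  case: (phiP hfA) => [e|r' i' g' rF' ei' gG' gr' nc'|r' i' g' rS' ei' gG' gr' nc'].
  + by move: nc; rewrite -(Const_act_inv hG fA e) eqxx.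
  + by case: (F1_S2 rF' rS gG' (groupM hG gG)); rewrite gr' hgr.
  + have er : r' = r by apply: (S2_eq rS' rS gG' (groupM hG gG)); rewrite gr' hgr.
    subst r'.
    have -> : i' = i by apply: val_inj; rewrite ei ei'.
    rewrite /=; congr (inr (_, _)).
    by apply: (free_eq rS gG' (groupM hG gG)); rewrite gr' hgr.
Qed.

Lemma phi_inj : {in A &, injective phi}.
Proof.
move=> f1 f2 f1A f2A.
case: (phiP f1A) => [e1|r1 i1 g1 rF1 ei1 gG1 gr1 nc1|r1 i1 g1 rS1 ei1 gG1 gr1 nc1];
case: (phiP f2A) => [e2|r2 i2 g2 rF2 ei2 gG2 gr2 nc2|r2 i2 g2 rS2 ei2 gG2 gr2 nc2] //.
- by case=> e; rewrite e1 e2 e.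
- case=> ei eg; have er : r1 = r2.
    by rewrite -(nth_index r1 (_ : r1 \in enum F1)) ?mem_enum // -ei1 ei ei2 nth_index ?mem_enum.
  subst r2; rewrite -gr1 -gr2; apply/eqP; rewrite coset_eq // eg //.
- case=> ei eg; have er : r1 = r2.
    by rewrite -(nth_index r1 (_ : r1 \in enum S2)) ?mem_enum // -ei1 ei ei2 nth_index ?mem_enum.
  by subst r2; rewrite -gr1 -gr2 eg.
Qed.


Lemma phi_surj y : y \in rhs_set G tau N1 N2 -> exists2 f, f \in A & phi f = y.
Proof.
case: y => [[b|[i C]]|[i g]]; rewrite inE.
- move=> _; exists (Const b); first exact: ConstA.
  by rewrite phi_const !ffunE group1.
- case/lcosetsP => g gG ->.
  have iF : i < size (enum F1) by rewrite -cardE.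
  set r := nth (Const false) (enum F1) i.
  have rF : r \in F1 by rewrite -mem_enum mem_nth.
  have [rA rR] := F1P rF.
  have fA : act g r \in A by apply: actA.
  exists (act g r) => //.
  case: (phiP fA) => [e|r' i' g' rF' ei' gG' gr' nc'|r' i' g' rS' ei' gG' gr' nc'].
  + have := Const_act_inv gG rA e => e2.
    by move: (Const_isR (r 1)); rewrite -e2 /isR rR eqxx.
  + have er : r' = r by apply: (F1_eq rF' rF gG' gG).
    subst r'.
    have -> : i' = i by apply: val_inj; rewrite ei' index_uniq ?enum_uniq.
    have -> // : g' *: <[tau]> = g *: <[tau]> by apply/eqP; rewrite -(coset_eq rF) ?gr' ?eqxx.
  + by case: (F1_S2 rF rS' gG gG').
- move=> gG.
  have iF : i < size (enum S2) by rewrite -cardE.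
  set r := nth (Const false) (enum S2) i.
  have rS : r \in S2 by rewrite -mem_enum mem_nth.
  have [rA rs _] := S2P rS.
  have fA : act g r \in A by apply: actA.
  exists (act g r) => //.
  case: (phiP fA) => [e|r' i' g' rF' ei' gG' gr' nc'|r' i' g' rS' ei' gG' gr' nc'].
  + have := Const_act_inv gG rA e => e2.
    by move: (Const_free (r 1)); rewrite -e2 rs eqxx.
  + by case: (F1_S2 rF' rS gG' gG).
  + have er : r' = r by apply: (S2_eq rS' rS gG' gG).
    subst r'.
    have -> : i' = i by apply: val_inj; rewrite ei' index_uniq ?enum_uniq.
    by have -> // : g' = g by apply: (free_eq rS gG' gG).
Qed.

Lemma iso_N : gset_iso G A (coind_act G) (rhs_set G tau N1 N2) (@rhs_act gT N1 N2).
Proof.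
exists phi; split.
- exact: phi_in.
- exact: phi_inj.
- exact: phi_surj.
- by move=> g gG f fA; apply: phi_equiv.
Qed.

Lemma cardA_N : #|A| = (2 + N1 * p + N2 * (2 * p))%N.
Proof.
have -> : #|A| = #|rhs_set G tau N1 N2|.
  rewrite -(card_in_imset phi_inj).
  have -> // : [set phi x | x in A] = rhs_set G tau N1 N2.
  apply/setP => y; apply/imsetP/idP => [[f fA ->]|/phi_surj[f fA <-]]; first exact: phi_in.
  by exists f.
rewrite card_rhs card_lcosets cardG.
have := Lagrange RG; rewrite cardG -/(order tau) otau => h.
have -> : #|G : <[tau]>| = p by apply/eqP; rewrite -(eqn_pmul2l (isT : 0 < 2)) h.
by [].
Qed.


Lemma zpart_tau x : x \in G -> zpart (tau * x) = zpart x.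
Proof.
move=> xG; rewrite /zpart; case xz: (x \in <[z]>).
  have -> : (tau * x \in <[z]>) = false.
    apply/negP => txz; move: tauNZ.
    by rewrite -(mulgK x tau) groupM ?groupV.
  by rewrite mulgA tautau mul1g.
by have := G_dec xG; rewrite xz /= => ->.
Qed.

Lemma zpart_id x : x \in <[z]> -> zpart x = x.
Proof. by rewrite /zpart => ->. Qed.

Lemma cardA : #|A| = (2 ^ p)%N.
Proof.
rewrite -oz; apply: (card_via (ext := fun c => [ffun x => (x \in G) && c (zpart x)])).
  move=> f1 f2 f1A f2A h; apply/ffunP => x; case xG: (x \in G).
    by rewrite (fzpart f1A xG) (fzpart f2A xG) h // zpartZ.
  have n1 : f1 x = false by case/inA: f1A => h1 _; apply: h1; rewrite xG.
  have n2 : f2 x = false by case/inA: f2A => h1 _; apply: h1; rewrite xG.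
  by rewrite n1 n2.
move=> c hc; split.
  apply/inA; split=> x; rewrite !ffunE; first by move/negbTE ->.
  by move=> xG; rewrite groupM ?tauG // xG zpart_tau.
by move=> x xz; rewrite ffunE (subsetP ZG) // zpart_id.
Qed.


Definition k := p./2.
Definition m := k.+1.
Definition Hs := [set z ^+ (nat_of_ord i) | i : 'I_m].

Lemma p_eq : p = (2 * k + 1)%N.
Proof. have := odd_double_half p; rewrite odd_p /k -mul2n => h. lia. Qed.

Lemma m_le : m <= p. Proof. rewrite /m p_eq; lia. Qed.

Lemma cardH : #|Hs| = m.
Proof.
rewrite /Hs card_imset ?card_ord // => i j /eqP.
by rewrite eq_expg_ord ?oz ?m_le // => /eqP.
Qed.

Lemma HZ : Hs \subset <[z]>.
Proof. by apply/subsetP => w /imsetP[i _ ->]; apply: mem_cycle. Qed.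

Lemma cover w : w \in <[z]> -> (w \in Hs) || (w^-1 \in Hs).
Proof.
case/cycleP => i ->; rewrite -(expg_mod i Hzp).
have ip : i %% p < p by rewrite ltn_mod prime_gt0.
move: (i %% p) ip => j jp.
case: (ltnP j m) => jm.
  by apply/orP; left; apply/imsetP; exists (Ordinal jm).
have e : (z ^+ j)^-1 = z ^+ (p - j).
  by apply/eqP; rewrite eq_invg_mul -expgD subnKC ?Hzp // ltnW.
have pjm : p - j < m by move: jm jp; rewrite /m p_eq; lia.
by apply/orP; right; rewrite e; apply/imsetP; exists (Ordinal pjm).
Qed.

Lemma overlap w : w \in Hs -> w^-1 \in Hs -> w = 1.
Proof.
case/imsetP => i _ -> /imsetP[j _ e].
have : z ^+ (i + j) == 1 by rewrite expgD -e mulgV.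
rewrite -order_dvdn oz => d.
have lt : (i + j < p)%N by move: (ltn_ord i) (ltn_ord j); rewrite /m p_eq; lia.
have ij0 : (i + j = 0)%N.
  by case: (posnP (i + j)) => // h; move: (dvdn_leq h d); lia.
have -> : (i : nat) = 0%N by lia.
by rewrite expg0.
Qed.


Definition hpart w := if w \in Hs then w else w^-1.

Lemma hpartH w : w \in <[z]> -> hpart w \in Hs.
Proof. by move=> wz; rewrite /hpart; case: ifP => // /negbT h; move: (cover wz); rewrite (negbTE h). Qed.

Lemma hpartV w : w \in <[z]> -> hpart w^-1 = hpart w.
Proof.
move=> wz; rewrite /hpart invgK.
case: ifP => h1; case: ifP => h2 //.
  by rewrite (overlap h2 h1) invg1.
by move: (cover wz); rewrite h1 h2.
Qed.

Lemma zpart_taur x : x \in G -> zpart (x * tau) = (zpart x)^-1.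
Proof.
move=> xG; case/orP: (G_dec xG) => [xz|txz].
  by rewrite wtau // zpart_tau ?groupV // !zpart_id ?groupV.
have ex : x = tau * (tau * x) by rewrite mulgA tautau mul1g.
have nx : x \notin <[z]>.
  apply/negP => xz; move: tauNZ; by rewrite -(mulgK x tau) groupM ?groupV.
rewrite {1}ex -mulgA wtau // mulgA tautau mul1g zpart_id ?groupV //.
by rewrite /zpart (negbTE nx).
Qed.

Definition Tfix := [set f in A | act tau f == f].

Lemma TfixP f : f \in Tfix -> f \in A /\ act tau f = f.
Proof. by rewrite /Tfix in_set => /andP[? /eqP]. Qed.

Lemma fV f w : f \in Tfix -> w \in <[z]> -> f w^-1 = f w.
Proof.
case/TfixP => fA ft wz; have wG : w \in G by apply: (subsetP ZG).
move/ffunP: ft => /(_ w); rewrite actE wG wtau //.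
by case/inA: fA => _ -> //; rewrite groupV.
Qed.

Lemma fh f x : f \in Tfix -> x \in G -> f x = f (hpart (zpart x)).
Proof.
move=> fT xG; have [fA _] := TfixP fT.
rewrite (fzpart fA xG) /hpart; case: ifP => // _.
by rewrite fV // zpartZ.
Qed.

Lemma cardT : #|Tfix| = (2 ^ m)%N.
Proof.
rewrite -cardH; apply: (card_via (ext := fun c => [ffun x => (x \in G) && c (hpart (zpart x))])).
  move=> f1 f2 f1T f2T h; apply/ffunP => x; case xG: (x \in G).
    by rewrite (fh f1T xG) (fh f2T xG) h // hpartH // zpartZ.
  have [f1A _] := TfixP f1T; have [f2A _] := TfixP f2T.
  have n1 : f1 x = false by case/inA: f1A => h1 _; apply: h1; rewrite xG.
  have n2 : f2 x = false by case/inA: f2A => h1 _; apply: h1; rewrite xG.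
  by rewrite n1 n2.
move=> c hc; split.
  have eA : [ffun x => (x \in G) && c (hpart (zpart x))] \in A.
    apply/inA; split=> x; rewrite !ffunE; first by move/negbTE ->.
    by move=> xG; rewrite groupM ?tauG // xG zpart_tau.
  rewrite /Tfix in_set eA /=; apply/eqP/ffunP => x; rewrite actE !ffunE.
  case xG: (x \in G) => //.
  by rewrite groupM ?tauG // zpart_taur // hpartV // zpartZ.
move=> x xH; have xz : x \in <[z]> by apply: (subsetP HZ).
by rewrite ffunE (subsetP ZG) // zpart_id // /hpart xH.
Qed.


Definition C0 := [set Const b | b : bool].

Lemma cardC0 : #|C0| = 2%N.
Proof.
rewrite card_imset ?card_bool // => b1 b2 /ffunP /(_ 1).
by rewrite !ffunE group1.
Qed.

Lemma F1E : F1 = Tfix :\: C0.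
Proof.
apply/setP => f; rewrite in_setD; apply/idP/andP => [fF|[nC fT]].
  have [fA sf] := F1P fF; split.
    apply/negP => /imsetP[b _ e]; move: (Const_isR b).
    by rewrite -e /isR sf eqxx.
  rewrite /Tfix in_set fA /=.
  have : tau \in stab f by rewrite sf cycle_id.
  by rewrite inE => /andP[].
have [fA ft] := TfixP fT.
have nc : f != Const (f 1).
  by apply/negP => /eqP e; move: nC; rewrite e; apply/negP/negPn/imsetP; exists (f 1).
rewrite /F1 in_set fA /isR eqEsubset /=; apply/andP; split; apply/subsetP => x; rewrite inE.
  case/andP=> xG /eqP xr.
  case/orP: (G_dec xG) => [xz|txz]; first by rewrite (fixZ1 fA nc xz xr) group1.
  have : act (tau * x) f = f by rewrite actM ?tauG // xr ft.
  move/(fixZ1 fA nc txz) => e.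
  have -> : x = tau by rewrite -(mul1g x) -tautau -mulgA e mulg1.
  exact: cycle_id.
rewrite R_elems => /orP[]/eqP->; first by rewrite group1 act1 ?eqxx.
by rewrite tauG ft eqxx.
Qed.

Lemma N1E : N1 = (2 ^ m - 2)%N.
Proof.
rewrite /N1 F1E cardsD cardT.
have -> : Tfix :&: C0 = C0.
  apply/setIidPr/subsetP => f /imsetP[b _ ->].
  by rewrite /Tfix in_set ConstA act_Const ?tauG ?eqxx.
by rewrite cardC0.
Qed.

Lemma N2E : N2 = ((2 ^ (p - 1) - 1) %/ p + 1 - 2 ^ ((p - 1) %/ 2))%N.
Proof.
have h := cardA_N; rewrite cardA N1E in h.
have hp := p_eq.
have ek : ((p - 1) %/ 2)%N = k by rewrite hp addnK mulKn.
have e1 : (p - 1)%N = (k + k)%N by rewrite hp addnK mul2n addnn.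
rewrite ek e1 expnD.
have e2p : (2 ^ p = 2 ^ k * 2 ^ k * 2)%N by rewrite hp addn1 expnS mulnC mul2n -addnn expnD.
have e2m : (2 ^ m = 2 ^ k * 2)%N by rewrite /m expnS mulnC.
rewrite e2p e2m in h.
have X1 : (0 < 2 ^ k)%N by rewrite expn_gt0.
move: (2 ^ k)%N X1 h => X X1 h.
case: X X1 h => // Y _ h.
have hs : (Y.+1 * 2 - 2 = Y * 2)%N by lia.
rewrite hs in h; rewrite subn1.
have e : (Y.+1 * Y.+1).-1 = (p * (Y + N2))%N by lia.
rewrite e mulKn ?prime_gt0 //; lia.
Qed.

End Grp.

Theorem lemma8p4 (p : nat) (gT : finGroupType) (G : {group gT}) (tau z : gT) :
  prime p -> odd p -> dihedral_pres G p tau z ->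
  gset_iso G (coind_set G tau) (coind_act G)
    (rhs_set G tau (2 ^ ((p + 1) %/ 2) - 2)
                   ((2 ^ (p - 1) - 1) %/ p + 1 - 2 ^ ((p - 1) %/ 2)))
    (@rhs_act gT (2 ^ ((p + 1) %/ 2) - 2)
                 ((2 ^ (p - 1) - 1) %/ p + 1 - 2 ^ ((p - 1) %/ 2))).
Proof.
move=> pr od [HG Ht2 Hzp Htz cG].
have hp := p_eq pr od cG.
have em : ((p + 1) %/ 2)%N = m p.
  rewrite /m {1}hp -addnA (_ : 1 + 1 = 2 * 1)%N // -mulnDr mulKn //. 
  by rewrite addn1.
rewrite em -(N1E pr od HG Ht2 Hzp Htz cG) -(N2E pr od HG Ht2 Hzp Htz cG).
exact: (iso_N pr od HG Ht2 Hzp Htz cG).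
Qed.
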